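(* Let $\mathcal X,\mathcal U$ be finite nonempty sets, $f:\mathcal X\times\mathcal U\to\mathcal X$ and $\ell,g:\mathcal X\to\mathbb R$. Let $V_{\mathrm A}^*(x)=\max_{\pi\in\Pi}\min_{\tau\in\mathbb N}g(\xi_x^\pi(\tau))$, $\tilde\ell(x)=\min\{\ell(x),V_{\mathrm A}^*(x)\}$, $$\tilde v_{\mathrm{RA}}^*(x)=\max_{\mathbf u\in\mathbb U}\max_{\tau\in\mathbb N}\min\Big\{\tilde\ell(\xi_x^{\mathbf u}(\tau)),\min_{\kappa\le\tau}g(\xi_x^{\mathbf u}(\kappa))\Big\},$$ $$v_{\mathrm{RAA}}^*(x)=\max_{\mathbf u\in\mathbb U}\min\Big\{\max_{\tau\in\mathbb N}\ell(\xi_x^{\mathbf u}(\tau)),\min_{\kappa\in\mathbb N}g(\xi_x^{\mathbf u}(\kappa))\Big\}.$$ Then $v_{\mathrm{RAA}}^*(x)=\tilde v_{\mathrm{RA}}^*(x)$ for every $x\in\mathcal X$.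
   Context: $\mathbb N=\{0,1,\dots\}$; $\Pi$ is the set of maps $\mathcal X\to\mathcal U$; $\mathbb U$ is the set of sequences $\mathbb N\to\mathcal U$. For $\pi\in\Pi$: $\xi_x^\pi(0)=x$, $\xi_x^\pi(t+1)=f(\xi_x^\pi(t),\pi(\xi_x^\pi(t)))$. For $\mathbf u\in\mathbb U$: $\xi_x^{\mathbf u}(0)=x$, $\xi_x^{\mathbf u}(t+1)=f(\xi_x^{\mathbf u}(t),\mathbf u(t))$. *)

(* Defs.v *)
From HB Require Import structures.
From mathcomp Require Import all_boot all_order all_algebra.
From mathcomp Require Import all_classical all_reals.
Set Implicit Arguments. Unset Strict Implicit. Unset Printing Implicit Defensive.
Import Order.TTheory GRing.Theory Num.Theory.
Local Open Scope classical_set_scope.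
Local Open Scope ring_scope.

(* Reach-avoid on a finite deterministic system.  max/min over infinite index
   sets are rendered as sup/inf (all sets involved take values in the finite
   images of g and l, so sup/inf are attained, i.e. are max/min). *)

Section Defs.
Variables (X U : finType) (f : X -> U -> X).

Fixpoint traj_pi (pi : X -> U) (x : X) (t : nat) : X :=
  match t with
  | 0 => x
  | t'.+1 => let y := traj_pi pi x t' in f y (pi y)
  end.

Fixpoint traj_u (u : nat -> U) (x : X) (t : nat) : X :=
  match t with
  | 0 => x
  | t'.+1 => f (traj_u u x t') (u t')
  end.

Variable R : realType.
Variables (l g : X -> R).

Definition VA (x : X) : R :=
  sup (range (fun pi : X -> U => inf (range (fun t : nat => g (traj_pi pi x t))))).

Definition ltil (x : X) : R := Num.min (l x) (VA x).

Definition vRA_til (x : X) : R :=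
  sup (range (fun u : nat -> U =>
    sup (range (fun tau : nat =>
      Num.min (ltil (traj_u u x tau))
              (inf [set g (traj_u u x k) | k in [set k : nat | (k <= tau)%N]]))))).

Definition vRAA (x : X) : R :=
  sup (range (fun u : nat -> U =>
    Num.min (sup (range (fun tau : nat => l (traj_u u x tau))))
            (inf (range (fun k : nat => g (traj_u u x k)))))).
End Defs.

(* Main.v *)
Require Import Defs.
From mathcomp Require Import all_boot all_order all_algebra.
From mathcomp Require Import all_classical all_reals.
Import Order.TTheory GRing.Theory Num.Theory.
Local Open Scope classical_set_scope.
Local Open Scope ring_scope.

Section Aux.
Variable R : realType.

Lemma inf_le' (S : set R) b s : (forall y, S y -> b <= y) -> S s -> inf S <= s.
Proof. by move=> hb Ss; apply: ge_inf => //; exists b => y /hb. Qed.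

Lemma sup_ge' (S : set R) b s : (forall y, S y -> y <= b) -> S s -> s <= sup S.
Proof. by move=> hb Ss; apply: ub_le_sup => //; exists b => y /hb. Qed.

Lemma min_sup_le (S : set R) a M : S !=set0 ->
  (forall s, S s -> Num.min s a <= M) -> Num.min (sup S) a <= M.
Proof.
move=> S0 H; case: (leP a M) => aM; first by rewrite ge_min aM orbT.
have : sup S <= M.
  apply: ge_sup => // s Ss; have := H s Ss; rewrite ge_min => /orP[//|].
  by rewrite leNgt aM.
by move=> h; rewrite ge_min h.
Qed.
End Aux.

Theorem mainTheorem8 (X U : finType) (f : X -> U -> X) (R : realType)
  (l g : X -> R) (u0 : U) :
  forall x : X, vRAA f l g x = vRA_til f l g x.
Proof.
pose K := \sum_(z : X) (`|l z| + `|g z|).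
have hK z : `|l z| + `|g z| <= K.
  rewrite /K (bigD1 z) //= lerDl; apply: sumr_ge0 => i _; exact: addr_ge0.
have lK z : - K <= l z <= K.
  rewrite -ler_norml; apply: le_trans (hK z); rewrite lerDl //.
have gK z : - K <= g z <= K.
  rewrite -ler_norml; apply: le_trans (hK z); rewrite lerDr //.
have gKl z : - K <= g z by case/andP: (gK z).
have gKu z : g z <= K by case/andP: (gK z).
have lKu z : l z <= K by case/andP: (lK z).
have infgK (T : Type) (h : T -> X) (A : set T) : A !=set0 ->
    inf [set g (h k) | k in A] <= K.
  case=> z Sz; apply: le_trans (gKu (h z)); apply: (@inf_le' _ _ (- K)).
    by move=> y [w _ <-].
  by exists z.
have infgK' (T : Type) (h : T -> X) (t : T) : inf (range (fun s => g (h s))) <= K.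
  apply: le_trans (gKu (h t)); apply: (@inf_le' _ _ (- K)).
    by move=> y [w _ <-].
  by exists t.
move=> x; apply/eqP; rewrite eq_le; apply/andP; split.
-
  apply: ge_sup; first by exists (Num.min (sup (range (fun tau => l (traj_u f (fun _ => u0) x tau))))
            (inf (range (fun k => g (traj_u f (fun _ => u0) x k))))); exists (fun _ => u0).
  move=> _ [u _ <-].
  set xi := traj_u f u x.
  set m := inf (range (fun k => g (xi k))).
  have gm k : m <= g (xi k).
    by apply: (@inf_le' _ _ (- K)); [move=> y [w _ <-]|exists k].
  apply: min_sup_le; first by exists (l (xi 0%N)), 0%N.
  move=> _ [tau _ <-].
  have VAm : m <= VA f g (xi tau).
    pose S z := exists k, (tau <= k)%N /\ xi k = z.
    have [pi hpi] : sigT (fun pi : X -> U => forall z, S z -> S (f z (pi z))).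
      apply: (@choice X U (fun z c => S z -> S (f z c))) => z; case: (pselect (S z)) => [[k [hk <-]]|nS].
        by exists (u k) => _; exists k.+1; split => //; apply: leqW.
      by exists u0.
    have Str t : S (traj_pi f pi (xi tau) t).
      elim: t => [|t IH] /=; first by exists tau.
      exact: hpi.
    apply: le_trans (_ : inf (range (fun t => g (traj_pi f pi (xi tau) t))) <= _).
      apply: lb_le_inf; first by exists (g (xi tau)), 0%N.
      move=> _ [t _ <-]; have [k [_ <-]] := Str t; exact: gm.
    apply: (@sup_ge' _ _ K); last by exists pi.
    by move=> _ [p _ <-]; apply: infgK'; exact: 0%N.
  have Im : m <= inf [set g (xi k) | k in [set k : nat | (k <= tau)%N]].
    apply: lb_le_inf; first by exists (g (xi 0%N)), 0%N.
    by move=> _ [k _ <-].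
  apply: le_trans (_ : Num.min (ltil f l g (xi tau))
       (inf [set g (xi k) | k in [set k : nat | (k <= tau)%N]]) <= _).
    rewrite /ltil !le_min !ge_min !lexx /= Im !orbT /= andbT.
    by rewrite VAm orbT.
  apply: le_trans (_ : sup (range (fun tau0 : nat => Num.min (ltil f l g (xi tau0))
       (inf [set g (xi k) | k in [set k : nat | (k <= tau0)%N]]))) <= _).
    apply: (@sup_ge' _ _ K); last by exists tau.
    move=> _ [t _ <-]; rewrite ge_min; apply/orP; right.
    by apply: infgK; exists 0%N.
  apply: (@sup_ge' _ _ K); last by exists u.
  move=> _ [v _ <-]; apply: ge_sup; first by exists (Num.min (ltil f l g (traj_u f v x 0))
       (inf [set g (traj_u f v x k) | k in [set k : nat | (k <= 0)%N]])), 0%N.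
  move=> _ [t _ <-]; rewrite ge_min; apply/orP; right.
  by apply: infgK; exists 0%N.
-
  apply: ge_sup; first by eexists; exists (fun _ => u0).
  move=> _ [u _ <-].
  apply: ge_sup; first by eexists; exists 0%N.
  move=> _ [tau _ <-].
  set xi := traj_u f u x; set y := xi tau.
  set I := inf [set g (xi k) | k in [set k : nat | (k <= tau)%N]].
  rewrite /ltil.
  have -> : Num.min (Num.min (l y) (VA f g y)) I = Num.min (VA f g y) (Num.min (l y) I).
    by rewrite (minC (l y)) -minA.
  apply: min_sup_le; first by eexists; exists (fun _ => u0).
  move=> _ [pi _ <-].
  set s := inf _.
  pose u' t := if (t < tau)%N then u t else pi (traj_pi f pi y (t - tau)).
  have e1 t : (t <= tau)%N -> traj_u f u' x t = xi t.
    elim: t => [|t IH] ht //=; rewrite IH ?(ltnW ht) // /u' ht //.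
  have e2 t : traj_u f u' x (tau + t) = traj_pi f pi y t.
    elim: t => [|t IH]; first by rewrite addn0 e1.
    by rewrite addnS /= IH /u' ltnNge leq_addr /= addKn.
  apply: le_trans (_ : Num.min (sup (range (fun t => l (traj_u f u' x t))))
                          (inf (range (fun k => g (traj_u f u' x k)))) <= _); last first.
    apply: (@sup_ge' _ _ K); last by exists u'.
    move=> _ [v _ <-]; rewrite ge_min; apply/orP; right; exact: infgK'.
  rewrite le_min; apply/andP; split.
    rewrite ge_min; apply/orP; right; rewrite ge_min; apply/orP; left.
    apply: (@sup_ge' _ _ K); first by move=> _ [w _ <-].
    by exists tau => //; rewrite e1.
  apply: lb_le_inf; first by eexists; exists 0%N.
  move=> _ [k _ <-]; case: (leqP k tau) => hk.
    rewrite e1 // ge_min; apply/orP; right; rewrite ge_min; apply/orP; right.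
    by apply: (@inf_le' _ _ (- K)); [move=> _ [w _ <-]|exists k].
  rewrite ge_min; apply/orP; left.
  have -> : k = (tau + (k - tau))%N by rewrite subnKC // ltnW.
  rewrite e2; apply: (@inf_le' _ _ (- K)); [move=> _ [w _ <-]|exists (k - tau)%N] => //.
Qed.
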